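(* Let $\mathcal T\subset\binom{[n]}{3}$ be an intersecting family with $\tau(\mathcal T)=3$. Then $\gamma_1(\mathcal T)\leq 5$, with equality if and only if $\mathcal T$ is isomorphic to $\mathcal T_0$.
   Context: A family is intersecting if any two members intersect. $\tau(\mathcal T)$ is the minimum size of a set meeting every member of $\mathcal T$. $\gamma_1(\mathcal T)=\min_{x\in[n]}|\{T\in\mathcal T: x\notin T\}|$. $\mathcal T_0\subset\binom{[6]}{3}$ is $\{\{1,2,3\},\{1,2,4\},\{3,4,5\},\{3,4,6\},\{1,5,6\},\{2,5,6\},\{1,3,5\},\{2,4,5\},\{1,4,6\},\{2,3,6\}\}$. Isomorphic means equal up to an injective relabeling of vertices. *)

(* Defs.v *)
From mathcomp Require Import all_boot.
Set Implicit Arguments. Unset Strict Implicit. Unset Printing Implicit Defensive.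

(* Vertex set [n] is represented by 'I_n (vertex i of the paper is i-1). *)

Definition uniform3 n (T : {set {set 'I_n}}) : Prop :=
  forall A, A \in T -> #|A| = 3.

Definition intersecting n (T : {set {set 'I_n}}) : Prop :=
  forall A B, A \in T -> B \in T -> A :&: B != set0.

Definition transversal n (S : {set 'I_n}) (T : {set {set 'I_n}}) : bool :=
  [forall A in T, S :&: A != set0].

(* tau(T): minimum size of a set meeting every member of T
   (default n if there is no such set, which cannot happen for
   families without the empty set, since [set: 'I_n] then works) *)
Definition tau n (T : {set {set 'I_n}}) : nat :=
  \big[minn/n]_(S : {set 'I_n} | transversal S T) #|S|.

Definition gamma1 n (T : {set {set 'I_n}}) : nat :=
  \big[minn/#|T|]_(x : 'I_n) #|[set A in T | x \notin A]|.

(* triple {a,b,c} in [6], using the paper's 1-based labels *)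
Definition tr6 (a b c : nat) : {set 'I_6} :=
  [set (inord a.-1 : 'I_6); inord b.-1; inord c.-1].

Definition T0 : {set {set 'I_6}} :=
  [set:: [:: tr6 1 2 3; tr6 1 2 4; tr6 3 4 5; tr6 3 4 6; tr6 1 5 6;
             tr6 2 5 6; tr6 1 3 5; tr6 2 4 5; tr6 1 4 6; tr6 2 3 6]].

Definition iso_T0 n (T : {set {set 'I_n}}) : Prop :=
  exists f : 'I_6 -> 'I_n, injective f /\ T = [set f @: (A : {set 'I_6}) | A in T0].

(* Main.v *)
Require Import Defs.
From mathcomp Require Import all_boot.
Set Implicit Arguments. Unset Strict Implicit. Unset Printing Implicit Defensive.

Definition memn (x : nat) (l : seq nat) : bool := has (eqn x) l.
Definition inter (C D : seq nat) : bool := has (fun i => memn i D) C.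
Definition covers (S : seq nat) (K : seq (seq nat)) := all (inter S) K.
Fixpoint subseqs (l : seq nat) : seq (seq nat) :=
  match l with [::] => [:: [::]] | x :: l' => let s := subseqs l' in map (cons x) s ++ s end.
Definition smalls k := [seq S <- subseqs (iota 0 k) | size S <= 2].
Definition branches (K : seq (seq nat)) k (S : seq nat) := [seq C <- subseqs (iota 0 k) |
   [&& 0 < size C, size C <= 3, ~~ inter C S & covers C K]].
Definition Lk (K : seq (seq nat)) k := undup [seq C <- subseqs (iota 0 k) | (size C == 3) && covers C K].
Definition pickbest (K : seq (seq nat)) k (S0 : seq nat) (cs : seq (seq nat)) :=
  foldl (fun b S => if size (branches K k S) < size (branches K k b) then S else b) S0 cs.
Definition T0abs : seq (seq nat) :=
  [:: [:: 0;1;2]; [::0;1;3]; [::2;3;4]; [::2;3;5]; [::0;4;5];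
      [::1;4;5]; [::0;2;4]; [::1;3;4]; [::0;3;5]; [::1;2;5]].
Definition gabs (s : seq (seq nat)) k :=
  foldr minn (size s) [seq count (fun C => i \notin C) s | i <- iota 0 k].
Definition eqs (C D : seq nat) := all (fun x => memn x D) C && all (fun x => memn x C) D.
Definition isoW (s : seq (seq nat)) (p : seq nat) :=
  all (fun A => has (eqs (map (nth 0 p) A)) s) T0abs &&
  all (fun C => has (fun A => eqs C (map (nth 0 p) A)) T0abs) s.
Definition okpart (s : seq (seq nat)) (p : seq nat) :=
  all (fun A => all (fun a => a < size p) A ==> has (eqs (map (nth 0 p) A)) s) T0abs.
Fixpoint gen (m k : nat) (s : seq (seq nat)) (p : seq nat) : seq (seq nat) :=
  match m with 0 => [:: p] | m'.+1 =>
    flatten [seq gen m' k s (rcons p i) | i <- iota 0 k & (i \notin p) && okpart s (rcons p i)] end.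
Definition Q k s := let g := gabs s k in if g <= 4 then true else if g == 5 then has (isoW s) (gen 6 k s [::]) else false.
Fixpoint enumF (K : seq (seq nat)) k (l acc : seq (seq nat)) : bool :=
  match l with
  | [::] => Q k acc
  | C :: l' => (if all (inter C) acc then enumF K k l' (C :: acc) else true) && (if C \in K then true else enumF K k l' acc)
  end.
Fixpoint search fuel (K : seq (seq nat)) k : bool :=
  match fuel with 0 => false | f.+1 =>
    match [seq S <- smalls k | covers S K] with
    | [::] => enumF K k (Lk K k) [::]
    | S0 :: cs' => let S := pickbest K k S0 cs' in
       all (fun C => search f (rcons K (C ++ iota k (3 - size C))) (k + (3 - size C))) (branches K k S)
    end end.

Lemma memnE x l : memn x l = (x \in l).
Proof.
rewrite /memn; apply/hasP/idP => [[y Hy /eqnP->]//|H].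
by exists x => //; apply/eqnP.
Qed.

Lemma interP C D : reflect (exists2 i, i \in C & i \in D) (inter C D).
Proof.
apply: (iffP hasP) => [[i H1 H2]|[i H1 H2]]; exists i => //; by rewrite ?memnE in H2 *.
Qed.

Lemma eqsP C D : eqs C D -> C =i D.
Proof.
case/andP => /allP H1 /allP H2 x; apply/idP/idP => Hx.
  by have := H1 x Hx; rewrite memnE.
by have := H2 x Hx; rewrite memnE.
Qed.

Lemma subseqsP l C : (C \in subseqs l) = subseq C l.
Proof.
elim: l C => [|x l IH] C /=; first by rewrite inE; case: C.
rewrite mem_cat; apply/idP/idP.
  case/orP => [/mapP [D HD ->]|HC]; first by rewrite /= eqxx -IH.
  by apply: subseq_trans (subseq_cons l x); rewrite -IH.
case: C => [|y C] /=; first by rewrite IH sub0seq orbT.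
case: eqP => [->|_] H; last by rewrite IH H orbT.
by apply/orP; left; apply/mapP; exists C; rewrite ?IH.
Qed.

Lemma pickbest_in K k S0 cs : pickbest K k S0 cs \in S0 :: cs.
Proof.
rewrite /pickbest; elim: cs S0 => [|S1 cs IH] S0 /=; first by rewrite inE.
move: (IH (if size (branches K k S1) < size (branches K k S0) then S1 else S0)).
case: ifP => _; rewrite !inE => /orP [->|->]; by rewrite ?orbT.
Qed.

Lemma gen_prop m k s p q : q \in gen m k s p -> uniq p -> all (fun i => i < k) p ->
  [/\ uniq q, all (fun i => i < k) q & size q = size p + m].
Proof.
elim: m p => [|m IH] p /=; first by rewrite inE => /eqP -> ??; rewrite addn0.
move=> /flattenP [l /mapP [i]]; rewrite mem_filter mem_iota /= add0n => /andP [/andP [Hi _] Hk] -> Hq Up Ap.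
have := IH _ Hq; rewrite rcons_uniq Hi Up all_rcons Hk Ap size_rcons addSnnS.
by move=> H; apply: H.
Qed.

Lemma bigmin_seq_le (I : eqType) (r : seq I) (F : I -> nat) a i :
  i \in r -> \big[minn/a]_(j <- r) F j <= F i.
Proof.
elim: r => [|j r IH] //; rewrite in_cons big_cons => /orP [/eqP->|/IH H].
  exact: geq_minl.
exact: leq_trans (geq_minr _ _) H.
Qed.

Lemma bigmin_le (I : finType) (P : pred I) (F : I -> nat) a i :
  P i -> \big[minn/a]_(j | P j) F j <= F i.
Proof.
move=> Pi; rewrite -big_filter; apply: bigmin_seq_le.
by rewrite mem_filter Pi mem_index_enum.
Qed.

Lemma bigmin_le_idx (I : finType) (P : pred I) (F : I -> nat) a :
  \big[minn/a]_(j | P j) F j <= a.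
Proof.
apply: (big_rec (fun x => x <= a)) => // j x _ Hx.
exact: leq_trans (geq_minr _ _) Hx.
Qed.

Lemma bigmin_ge (I : finType) (P : pred I) (F : I -> nat) a m :
  m <= a -> (forall i, P i -> m <= F i) -> m <= \big[minn/a]_(j | P j) F j.
Proof.
move=> Ha HF; apply: (big_rec (fun x => m <= x)) => // j x Pj Hx.
by rewrite leq_min HF.
Qed.

Lemma foldr_min_le (l : seq nat) a y : y \in l -> foldr minn a l <= y.
Proof.
elim: l => [|z l IH] //=; rewrite in_cons => /orP [/eqP->|/IH H].
  exact: geq_minl.
exact: leq_trans (geq_minr _ _) H.
Qed.

Lemma foldr_min_le_idx (l : seq nat) a : foldr minn a l <= a.
Proof. elim: l => [|z l IH] //=; exact: leq_trans (geq_minr _ _) IH. Qed.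

Lemma foldr_min_ge (l : seq nat) a m :
  m <= a -> (forall y, y \in l -> m <= y) -> m <= foldr minn a l.
Proof.
elim: l => [|z l IH] //= Ha H; rewrite leq_min H ?inE ?eqxx //=.
by apply: IH => // y Hy; apply: H; rewrite inE Hy orbT.
Qed.

Lemma enumF_sound K k (P : pred (seq nat)) l acc :
  enumF K k l acc ->
  (forall C D, C \in acc ++ filter P l -> D \in acc ++ filter P l -> inter C D) ->
  (forall C, C \in l -> C \in K -> P C) ->
  Q k (rev (filter P l) ++ acc).
Proof.
elim: l acc => [|C l IH] acc /=; first by [].
case/andP => H1 H2 Hpw HK.
case PC: (P C); rewrite /= PC in Hpw *.
  have Hall : all (inter C) acc.
    apply/allP => D HD; apply: Hpw; rewrite mem_cat ?inE ?eqxx ?orbT ?HD //.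
  rewrite Hall in H1.
  rewrite rev_cons cat_rcons; apply: IH => //.
    move=> D1 D2 HD1 HD2; apply: Hpw.
      by move: HD1; rewrite !mem_cat !inE; case/orP=>[/orP[]|] ->; rewrite ?orbT.
    by move: HD2; rewrite !mem_cat !inE; case/orP=>[/orP[]|] ->; rewrite ?orbT.
  by move=> D HD; apply: HK; rewrite inE HD orbT.
have CK : (C \in K) = false.
  by apply/negbTE/negP => /(HK C); rewrite inE eqxx PC => /(_ isT).
rewrite CK in H2; apply: IH => //.
by move=> D HD; apply: HK; rewrite inE HD orbT.
Qed.

Definition I n (x0 : 'I_n) (vs : seq 'I_n) (C : seq nat) : {set 'I_n} :=
  [set x in map (nth x0 vs) C].

Lemma memI n (x0 : 'I_n) vs C i : uniq vs -> all (fun j => j < size vs) C -> i < size vs ->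
  (nth x0 vs i \in I x0 vs C) = (i \in C).
Proof.
move=> Uv HC Hi; rewrite inE; apply/mapP/idP => [[j Hj]|Hj]; last by exists i.
have Hjk := allP HC j Hj.
by move/eqP; rewrite nth_uniq // => /eqP ->.
Qed.

Lemma I_sub n (x0 : 'I_n) vs C x : all (fun j => j < size vs) C -> x \in I x0 vs C -> x \in vs.
Proof. by move=> HC; rewrite inE => /mapP [j Hj ->]; apply: mem_nth; apply: (allP HC). Qed.

Lemma subseq_lt C k : subseq C (iota 0 k) -> all (fun j => j < k) C.
Proof. by move=> H; apply/allP => j /(mem_subseq H); rewrite mem_iota. Qed.

Lemma mem_map_eqi (T : eqType) (g : nat -> T) C D x : C =i D -> (x \in map g C) = (x \in map g D).
Proof.
by move=> H; apply/mapP/mapP => [[a Ha ->]|[a Ha ->]]; exists a; rewrite ?H // -H.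
Qed.

Definition Inv n (T : {set {set 'I_n}}) x0 (K : seq (seq nat)) (vs : seq 'I_n) :=
  [/\ uniq vs, K != [::] & forall C, C \in K ->
      [/\ subseq C (iota 0 (size vs)), size C = 3 & I x0 vs C \in T]].

Definition Cabs n (x0 : 'I_n) (vs : seq 'I_n) (E : {set 'I_n}) :=
  [seq i <- iota 0 (size vs) | nth x0 vs i \in E].

Lemma Cabs_map n (x0 : 'I_n) vs E : map (nth x0 vs) (Cabs x0 vs E) = [seq x <- vs | x \in E].
Proof.
rewrite /Cabs -filter_map; congr filter.
by have := mkseq_nth x0 vs; rewrite /mkseq.
Qed.

Lemma Cabs_mem n (x0 : 'I_n) vs E i : (i \in Cabs x0 vs E) = (i < size vs) && (nth x0 vs i \in E).
Proof. by rewrite mem_filter mem_iota andbC. Qed.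

Lemma map_nth_cat_l n (x0 : 'I_n) vs w C : all (fun j => j < size vs) C ->
  map (nth x0 (vs ++ w)) C = map (nth x0 vs) C.
Proof. by move=> H; apply/eq_in_map => j /(allP H) Hj; rewrite nth_cat Hj. Qed.

Lemma map_nth_cat_r n (x0 : 'I_n) vs w :
  map (nth x0 (vs ++ w)) (iota (size vs) (size w)) = w.
Proof.
rewrite -[size vs]addn0 iotaDl -map_comp.
rewrite (eq_map (g := nth x0 w)); first by have := mkseq_nth x0 w; rewrite /mkseq.
by move=> i /=; rewrite nth_cat ltnNge leq_addr /= addKn.
Qed.

Lemma step n (T : {set {set 'I_n}}) x0 K vs E :
  intersecting T -> uniform3 T -> Inv T x0 K vs -> E \in T ->
  let C := Cabs x0 vs E in let w := [seq x <- enum E | x \notin vs] in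
  [/\ subseq C (iota 0 (size vs)), covers C K, 0 < size C & size C <= 3] /\
  [/\ size w = 3 - size C, uniq (vs ++ w) &
      E = I x0 (vs ++ w) (C ++ iota (size vs) (size w))].
Proof.
move=> hI hU [Uv KN HK] HE C w.
have Csub : subseq C (iota 0 (size vs)) by apply: filter_subseq.
have Clt := subseq_lt Csub.
have Cov : covers C K.
  apply/allP => D HD; have [Dsub _ DT] := HK D HD.
  have := hI _ _ HE DT; case/set0Pn => x; rewrite inE => /andP [xE xD].
  move: (xD); rewrite inE => /mapP [j Hj Hx]; apply/interP; exists j => //.
  have Hjk := allP (subseq_lt Dsub) j Hj.
  by rewrite Cabs_mem Hjk -Hx.
have Cpos : 0 < size C.
  have [D HD] : exists D, D \in K by case: (K) KN => // D ? _; exists D; rewrite inE eqxx.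
  case/interP: (allP Cov D HD) => i Hi _.
  by case: (C) Hi.
have sizeC : size C = size [seq x <- enum E | x \in vs].
  rewrite -(size_map (nth x0 vs)) Cabs_map; apply: perm_size; apply: uniq_perm.
  - exact: filter_uniq.
  - exact: filter_uniq (enum_uniq _).
  move=> x; rewrite (mem_filter (fun y => y \in vs) x (enum E)) mem_enum mem_filter.
  by rewrite andbC.
have sum3 : size C + size w = 3.
  rewrite sizeC /w !size_filter count_predC -cardE; exact: hU.
have Uw : uniq (vs ++ w).
  rewrite cat_uniq Uv filter_uniq ?enum_uniq //= andbT.
  by apply/hasP => [[x]]; rewrite mem_filter => /andP [/negbTE ->].
split; split => //.
- by rewrite -sum3 leq_addr.
- by rewrite -sum3 addKn.
apply/setP => x; rewrite inE map_cat mem_cat map_nth_cat_l // Cabs_map map_nth_cat_r.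
rewrite mem_filter mem_filter mem_enum.
by case: (x \in vs); rewrite ?andbT ?andbF ?orbF.
Qed.

Lemma gamma1_abs n (T : {set {set 'I_n}}) x0 vs s : uniq vs -> uniq s ->
  (forall C, C \in s -> subseq C (iota 0 (size vs))) ->
  T = [set E in map (I x0 vs) s] -> gamma1 T = gabs s (size vs).
Proof.
move=> Uv Us Hs ->.
have Hlt C : C \in s -> all (fun j => j < size vs) C by move=> HC; apply: subseq_lt (Hs C HC).
have Uinj : {in s &, injective (I x0 vs)}.
  move=> C D HC HD E; apply: (@irr_sorted_eq _ ltn ltn_trans ltnn).
  - exact: (@subseq_sorted _ _ ltn_trans _ _ (Hs C HC) (iota_ltn_sorted 0 _)).
  - exact: (@subseq_sorted _ _ ltn_trans _ _ (Hs D HD) (iota_ltn_sorted 0 _)).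
  move=> i; apply/idP/idP => Hi.
    have Hk : i < size vs := allP (Hlt C HC) i Hi.
    by rewrite -(memI x0 Uv (Hlt D HD) Hk) -E memI // Hlt.
  have Hk : i < size vs := allP (Hlt D HD) i Hi.
  by rewrite -(memI x0 Uv (Hlt C HC) Hk) E memI // Hlt.
have Um : uniq (map (I x0 vs) s) by rewrite map_inj_in_uniq.
have cnt (x : 'I_n) : #|[set A in [set E in map (I x0 vs) s] | x \notin A]| =
              count (fun A : {set 'I_n} => x \notin A) (map (I x0 vs) s).
  rewrite (_ : [set A in _ | _] = [set A in filter (fun A : {set 'I_n} => x \notin A) (map (I x0 vs) s)]).
    by rewrite cardsE; move/card_uniqP: (filter_uniq (fun A : {set 'I_n} => x \notin A) Um) ->; rewrite size_filter.
  by apply/setP => A; rewrite !inE mem_filter andbC.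
have cardT : #|[set E in map (I x0 vs) s]| = size s.
  by rewrite cardsE; move/card_uniqP: Um ->; rewrite size_map.
have term (x : 'I_n) : count (fun A : {set 'I_n} => x \notin A) (map (I x0 vs) s) =
   if x \in vs then count (fun C => index x vs \notin C) s else size s.
  rewrite count_map; case: ifP => Hx.
    apply: eq_in_count => C HC /=.
    by rewrite -{1}(nth_index x0 Hx) memI ?index_mem // Hlt.
  rewrite -(count_predT s); apply: eq_in_count => C HC /=.
  by apply/negP => /(I_sub (Hlt C HC)); rewrite Hx.
rewrite /gamma1 cardT; apply/eqP; rewrite eqn_leq; apply/andP; split.
  apply: foldr_min_ge; first exact: bigmin_le_idx.
  move=> y /mapP [i]; rewrite mem_iota add0n => /= Hi ->.
  have Hx : nth x0 vs i \in vs by rewrite mem_nth.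
  have := @bigmin_le _ xpredT (fun x : 'I_n => #|[set A in [set E in map (I x0 vs) s] | x \notin A]|) (size s) (nth x0 vs i) isT.
  by rewrite cnt term Hx index_uniq.
apply: bigmin_ge; first exact: foldr_min_le_idx.
move=> x _; rewrite cnt term; case: ifP => Hx; last exact: foldr_min_le_idx.
apply: foldr_min_le; apply/mapP; exists (index x vs) => //.
by rewrite mem_iota add0n index_mem.
Qed.

Definition J (A : seq nat) : {set 'I_6} := [set x in map (@inord 5) A].

Lemma tr6E a b c : tr6 a b c = J [:: a.-1; b.-1; c.-1].
Proof. by apply/setP => x; rewrite !inE orbA. Qed.

Lemma T0E : T0 = [set E in map J T0abs].
Proof. by rewrite /T0 !tr6E. Qed.

Lemma imJ n (g : 'I_6 -> 'I_n) (h : nat -> 'I_n) A : all (fun a => a < 6) A ->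
  (forall a, a < 6 -> g (inord a) = h a) -> g @: J A = [set x in map h A].
Proof.
move=> HA Hgh; apply/setP => x; rewrite inE; apply/imsetP/mapP => [[y]|[a Ha ->]].
  rewrite inE => /mapP [a Ha ->] ->; exists a => //; apply: Hgh; exact: (allP HA a Ha).
exists (inord a); first by rewrite inE; apply: map_f.
by rewrite Hgh //; apply: (allP HA).
Qed.

Lemma T0lt : all (all (fun a => a < 6)) T0abs.
Proof. by []. Qed.

Lemma imT0 n (g : 'I_6 -> 'I_n) (h : nat -> 'I_n) :
  (forall a, a < 6 -> g (inord a) = h a) ->
  [set g @: (A : {set 'I_6}) | A in T0] = [set E in map (fun A => [set x in map h A]) T0abs].
Proof.
move=> Hgh; rewrite T0E; apply/setP => E; rewrite inE; apply/imsetP/mapP => [[A]|[A HA ->]].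
  rewrite inE => /mapP [A' HA' ->] ->; exists A' => //; rewrite (imJ (h := h)) //.
  exact: (allP T0lt A' HA').
exists (J A); first by rewrite inE map_f.
by rewrite (imJ (h := h)) //; exact: (allP T0lt A HA).
Qed.

Lemma iso_gamma n (T : {set {set 'I_n}}) : iso_T0 T -> gamma1 T = 5.
Proof.
case=> f [finj ->].
pose vs0 := [seq f (inord a) | a <- iota 0 6].
pose x0 := f ord0.
have Hn : forall a, a < 6 -> f (inord a) = nth x0 vs0 a.
  by move=> a Ha; rewrite (nth_map 0) ?size_iota // nth_iota.
rewrite (imT0 Hn).
have Hs : size vs0 = 6 by rewrite size_map size_iota.
rewrite (@gamma1_abs _ _ x0 vs0 T0abs) ?Hs //.
- rewrite map_inj_in_uniq ?iota_uniq // => a b; rewrite !mem_iota => /andP[_ Ha] /andP[_ Hb].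
  by move/finj/(congr1 val); rewrite /= !inordK.
- by move=> C; apply/(allP (_ : all (fun C => subseq C (iota 0 6)) T0abs)).
Qed.

Lemma iso_from n (T : {set {set 'I_n}}) x0 vs s p : uniq vs -> uniq p -> size p = 6 ->
  all (fun i => i < size vs) p -> isoW s p -> T = [set E in map (I x0 vs) s] -> iso_T0 T.
Proof.
move=> Uv Up Sp Ap /andP [/allP H1 /allP H2] ->.
pose f := fun i : 'I_6 => nth x0 vs (nth 0 p i).
have Hp (i : 'I_6) : nth 0 p i < size vs by apply: (allP Ap); rewrite mem_nth // Sp.
exists f; split.
  move=> i j; rewrite /f => /eqP; rewrite nth_uniq // => /eqP.
  by move/eqP; rewrite nth_uniq ?Sp // => /eqP /val_inj.
rewrite (imT0 (h := fun a => nth x0 vs (nth 0 p a))); last by move=> a Ha; rewrite /f inordK.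
apply/setP => E; rewrite !in_set; apply/mapP/mapP => [[C HC ->]|[A HA ->]].
  case/hasP: (H2 C HC) => A HA /eqsP Heq; exists A => //.
  by apply/setP => x; rewrite !inE (mem_map_eqi _ _ Heq) -map_comp.
case/hasP: (H1 A HA) => C HC /eqsP Heq; exists C => //.
by apply/setP => x; rewrite !inE -(mem_map_eqi _ _ Heq) -map_comp.
Qed.

Definition Goal n (T : {set {set 'I_n}}) := gamma1 T <= 5 /\ (gamma1 T = 5 -> iso_T0 T).

Lemma leaf n (T : {set {set 'I_n}}) x0 K vs : intersecting T -> uniform3 T ->
  Inv T x0 K vs -> [seq S <- smalls (size vs) | covers S K] = [::] ->
  enumF K (size vs) (Lk K (size vs)) [::] -> Goal T.
Proof.
move=> hI hU Hinv Hcs HF.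
have [Uv KN HK] := Hinv.
have LkP C : C \in Lk K (size vs) -> subseq C (iota 0 (size vs)).
  by rewrite mem_undup mem_filter subseqsP => /andP [_ ->].
have HE E : E \in T -> Cabs x0 vs E \in Lk K (size vs) /\ I x0 vs (Cabs x0 vs E) = E.
  move=> HE; have [[Csub Cov Cpos Cle] [Sw Uw EI]] := step hI hU Hinv HE.
  have C3 : size (Cabs x0 vs E) = 3.
    apply/eqP; rewrite eqn_leq Cle /= ltnNge; apply/negP => Hle.
    have : Cabs x0 vs E \in [seq S <- smalls (size vs) | covers S K].
      by rewrite mem_filter Cov mem_filter Hle subseqsP Csub.
    by rewrite Hcs.
  move: Sw; rewrite C3 subnn => /size0nil Hw; rewrite Hw /= !cats0 in EI.
  split; last by rewrite {2}EI.
  by rewrite mem_undup mem_filter C3 Cov subseqsP Csub.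
pose Lsel := [seq C <- Lk K (size vs) | I x0 vs C \in T].
have HQ := enumF_sound (P := fun C => I x0 vs C \in T) HF.
rewrite cats0 /= in HQ.
have {HQ} HQ : Q (size vs) (rev Lsel).
  apply: HQ.
    move=> C D; rewrite !mem_filter => /andP [HC /LkP /subseq_lt CL] /andP [HD /LkP /subseq_lt DL].
    case/set0Pn: (hI _ _ HC HD) => x; rewrite inE => /andP [xC xD].
    move: (xC); rewrite inE => /mapP [i Hi Hx].
    apply/interP; exists i => //.
    have Hik := allP CL i Hi.
    by rewrite -(memI x0 Uv DL Hik) -Hx.
  by move=> C _ /HK [].
have Tdef : T = [set E in map (I x0 vs) (rev Lsel)].
  apply/setP => E; rewrite inE map_rev mem_rev; apply/idP/mapP => [HET|[C HC ->]].
    have [H1 H2] := HE E HET; exists (Cabs x0 vs E) => //.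
    by rewrite mem_filter H2 HET.
  by move: HC; rewrite mem_filter => /andP [].
have G : gamma1 T = gabs (rev Lsel) (size vs).
  apply: gamma1_abs Uv _ _ Tdef.
    by rewrite rev_uniq filter_uniq // undup_uniq.
  by move=> C; rewrite mem_rev mem_filter => /andP [_ /LkP].
move: HQ; rewrite /Q -G.
case: leqP => [H4 _|H4]; first by split; [apply: leq_trans H4 _ | move=> H5; rewrite H5 in H4].
case: eqP => // H5 /hasP [p Hp Hiso]; split; first by rewrite H5.
move=> _; have [Up Ap Sp] := gen_prop Hp isT isT.
exact: iso_from Uv Up Sp Ap Hiso Tdef.
Qed.

Lemma search_sound n (T : {set {set 'I_n}}) (x0 : 'I_n) : intersecting T -> uniform3 T ->
  (forall S : {set 'I_n}, #|S| <= 2 -> ~~ Defs.transversal S T) ->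
  forall fuel K vs, search fuel K (size vs) -> Inv T x0 K vs -> Goal T.
Proof.
move=> hI hU hS; elim=> [//|f IH] K vs /=.
case Hcs: [seq S <- smalls (size vs) | covers S K] => [|S0 cs'].
  by move=> HF Hinv; apply: (leaf hI hU Hinv Hcs HF).
move=> /allP Hall Hinv.
have [Uv KN HK] := Hinv.
set S := pickbest K (size vs) S0 cs'.
have : S \in S0 :: cs' by apply: pickbest_in.
rewrite -Hcs mem_filter mem_filter subseqsP => /andP [_ /andP [S2 Ssub]].
have cS : #|I x0 vs S| <= 2.
  rewrite cardsE; apply: leq_trans (card_size _) _; by rewrite size_map.
move: (hS _ cS) => /forallPn [E]; rewrite negb_imply negbK => /andP [HE H0].
have [[Csub Cov Cpos Cle] [Sw Uw EI]] := step hI hU Hinv HE.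
set C := Cabs x0 vs E in Csub Cov Cpos Cle Sw Uw EI.
set w := [seq x <- enum E | x \notin vs] in Sw Uw EI.
have Cbr : C \in branches K (size vs) S.
  rewrite mem_filter Cpos Cle Cov subseqsP Csub andbT /= andbT.
  apply/negP => /interP [i Hi HiS].
  have := Hi; rewrite Cabs_mem => /andP [Hik HiE].
  move/eqP/setP: H0 => /(_ (nth x0 vs i)); rewrite !inE HiE andbT.
  by rewrite (map_f (nth x0 vs) HiS).
have := Hall C Cbr; rewrite -Sw => Hsearch.
apply: (IH (rcons K (C ++ iota (size vs) (size w))) (vs ++ w)); first by rewrite size_cat.
have Slt D : subseq D (iota 0 (size vs)) -> subseq D (iota 0 (size (vs ++ w))).
  move=> HD; apply: subseq_trans HD _; rewrite size_cat iotaD add0n; exact: prefix_subseq.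
split => //; first by case: (K).
move=> D; rewrite mem_rcons inE => /orP [/eqP ->|HD].
  split => //.
  - rewrite size_cat iotaD add0n; apply: cat_subseq => //; exact: subseq_refl.
  - by rewrite size_cat size_iota Sw subnKC.
  by rewrite -EI.
have [D1 D2 D3] := HK D HD; split => //; first exact: Slt.
by rewrite /I map_nth_cat_l //; apply: subseq_lt.
Qed.

Lemma search_ok : search 10 [:: [:: 0;1;2]] 3.
Proof. vm_compute. reflexivity. Qed.

Theorem corollary3p3 (n : nat) (T : {set {set 'I_n}}) :
  uniform3 T -> intersecting T -> tau T = 3 ->
  gamma1 T <= 5 /\ (gamma1 T = 5 <-> iso_T0 T).
Proof.
move=> hU hI htau.
have hS (S : {set 'I_n}) : #|S| <= 2 -> ~~ Defs.transversal S T.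
  move=> HS; apply/negP => Htr.
  have := @bigmin_le _ (fun S => Defs.transversal S T) (fun S => #|S|) n S Htr.
  rewrite -/(tau T) htau => H; have := leq_trans H HS; by [].
have [A HA] : exists A, A \in T.
  case: (set_0Vmem T) => [T0'|[A HA]]; last by exists A.
  have := hS set0; rewrite cards0 => /(_ isT); rewrite /Defs.transversal.
  by move/forallPn => [A]; rewrite T0' inE.
have A3 := hU A HA.
have [x0 _] : exists x0, x0 \in A.
  by apply/set0Pn; apply/negP => /eqP A0; move: A3; rewrite A0 cards0.
have Hinv : Inv T x0 [:: [:: 0;1;2]] (enum A).
  split => //; first exact: enum_uniq.
  move=> C; rewrite inE => /eqP ->; rewrite -cardE A3; split => //.
  rewrite (_ : I x0 (enum A) [:: 0; 1; 2] = A) //.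
  apply/setP => x; rewrite inE (_ : [:: 0; 1; 2] = iota 0 (size (enum A))); last by rewrite -cardE A3.
  by have := mkseq_nth x0 (enum A); rewrite /mkseq => ->; rewrite mem_enum.
have Sz : size (enum A) = 3 by rewrite -cardE.
have Hs : search 10 [:: [:: 0;1;2]] (size (enum A)) by rewrite Sz; exact: search_ok.
have [G1 G2] := @search_sound n T x0 hI hU hS 10 [:: [:: 0;1;2]] (enum A) Hs Hinv.
split => //; split => //; exact: iso_gamma.
Qed.
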